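(* Let $f \in \mathbb{C}[x_1,\dots,x_n]_d$. If $f$ has a local border decomposition with $r$ summands and base $[\ell]$, then $f$ has a standard local border decomposition with the same base $[\ell]$ and the same number $r$ of summands.
   Context: Let $\mathbb{C}(\epsilon)[\boldsymbol{x}]_1$ be the set of linear forms in $x_1,\dots,x_n$ with coefficients rational functions of $\epsilon$. A nonzero $\ell(\epsilon)\in\mathbb{C}(\epsilon)[\boldsymbol{x}]_1$ can be expanded as a Laurent series $\ell(\epsilon)=\sum_{i\ge q}\epsilon^i \ell_i$ with $\ell_i\in\mathbb{C}[\boldsymbol{x}]_1$, $\ell_q\neq 0$; its projective limit is $\lim_{\epsilon\to0}[\ell(\epsilon)] := [\ell_q]$, a point of the projective space of lines in $\mathbb{C}[\boldsymbol{x}]_1$. A border Waring rank decomposition of $f$ is an expression $f=\lim_{\epsilon\to0}\sum_{k=1}^r \ell_k^d$ with $\ell_k\in\mathbb{C}(\epsilon)[\boldsymbol{x}]_1$ (limit taken coefficientwise). It is a local border decomposition with base $[\ell]$ (for a nonzero $\ell\in\mathbb{C}[\boldsymbol{x}]_1$) if $\lim_{\epsilon\to0}[\ell_k(\epsilon)]=[\ell]$ for all $k=1,\dots,r$. A local border decomposition with base $[\ell]$ is standard if $\ell_1=\epsilon^q\gamma\ell$ for some $q\in\mathbb{Z}$ and $\gamma\in\mathbb{C}$. *)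

(* Defs.v *)
From HB Require Import structures.
From mathcomp Require Import all_boot all_order all_algebra fraction.
From mathcomp Require Import complex.
From mathcomp Require Import Rstruct.
From mathcomp Require Import mpoly.

Set Implicit Arguments.
Unset Strict Implicit.
Unset Printing Implicit Defensive.
Import GRing.Theory.
Local Open Scope ring_scope.

Definition CC : numClosedFieldType := complex Rdefinitions.R.

Definition Keps : fieldType := {fraction {poly CC}}.

Definition cst (c : CC) : Keps := tofrac (c%:P).

Definition eps : Keps := tofrac ('X : {poly CC}).

(* lim_{eps -> 0} x = c, for a rational function x: x is regular at 0
   (x = a/b with b(0) <> 0) and its value at 0 is c. *)
Definition lim0 (x : Keps) (c : CC) : Prop :=
  exists a b : {poly CC}, b.[0] != 0 /\ x = tofrac a / tofrac b /\ c = a.[0] / b.[0].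

Definition linform (n : nat) (l : 'I_n -> Keps) : {mpoly Keps[n]} :=
  \sum_(i < n) l i *: 'X_i.

(* lim_{eps->0} [l(eps)] = [b]  (projective limit): writing the Laurent
   expansion l = sum_{i>=q} eps^i l_i with l_q <> 0, we have [l_q] = [b],
   i.e. l_q = c b with c <> 0.  Here l_q is the value at 0 of eps^(-q) l,
   and since c b <> 0 (b <> 0 is assumed where used), q is the order of l. *)
Definition proj_lim (n : nat) (l : 'I_n -> Keps) (b : 'I_n -> CC) : Prop :=
  exists (q : int) (c : CC), c != 0 /\
    forall i : 'I_n, lim0 (eps ^ (- q) * l i) (c * b i).

Definition border_decomp (n d r : nat) (f : {mpoly CC[n]})
    (L : 'I_r -> 'I_n -> Keps) : Prop :=
  forall m : 'X_{1..n},
    lim0 ((\sum_(k < r) (linform (L k)) ^+ d)@_m) (f@_m).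

Definition local_border_decomp (n d r : nat) (f : {mpoly CC[n]})
    (b : 'I_n -> CC) (L : 'I_r -> 'I_n -> Keps) : Prop :=
  border_decomp d f L /\ forall k : 'I_r, proj_lim (L k) b.

Definition standard_local_border_decomp (n d r : nat) (f : {mpoly CC[n]})
    (b : 'I_n -> CC) (L : 'I_r -> 'I_n -> Keps) : Prop :=
  local_border_decomp d f b L /\
  forall h : (0 < r)%N, exists (q : int) (gamma : CC),
    forall i : 'I_n, L (Ordinal h) i = eps ^ q * cst gamma * cst (b i).

(* Main.v *)
Require Import Defs.
From HB Require Import structures.
From mathcomp Require Import all_boot all_order all_algebra fraction.
From mathcomp Require Import complex.
From mathcomp Require Import Rstruct.
From mathcomp Require Import mpoly.
From Stdlib Require Import ClassicalEpsilon.
Set Implicit Arguments.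
Unset Strict Implicit.
Unset Printing Implicit Defensive.
Import GRing.Theory.
Local Open Scope ring_scope.

Lemma tofrac_neq0 (p : {poly CC}) : p.[0] != 0 -> tofrac p != 0 :> Keps.
Proof. by move=> h; rewrite tofrac_eq0; apply: contra h => /eqP ->; rewrite horner0. Qed.

Lemma lim0_uniq x c e : lim0 x c -> lim0 x e -> c = e.
Proof.
move=> [a [b [hb [-> ->]]]] [a' [b' [hb' [E ->]]]].
move: E => /eqP; rewrite eqr_div ?tofrac_neq0 // -!tofracM tofrac_eq => /eqP E.
apply/eqP; rewrite eqr_div // -!hornerM E //.
Qed.

Lemma limD x y c e : lim0 x c -> lim0 y e -> lim0 (x + y) (c + e).
Proof.
move=> [a [b [hb [-> ->]]]] [a' [b' [hb' [-> ->]]]].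
exists (a * b' + a' * b), (b * b'); split; first by rewrite hornerM mulf_neq0.
have h1 := tofrac_neq0 hb; have h2 := tofrac_neq0 hb'.
by rewrite addf_div // addf_div // tofracD !tofracM hornerD !hornerM.
Qed.

Lemma limM x y c e : lim0 x c -> lim0 y e -> lim0 (x * y) (c * e).
Proof.
move=> [a [b [hb [-> ->]]]] [a' [b' [hb' [-> ->]]]].
exists (a * a'), (b * b'); split; first by rewrite hornerM mulf_neq0.
by rewrite mulf_div mulf_div !tofracM !hornerM.
Qed.

Lemma limN x c : lim0 x c -> lim0 (- x) (- c).
Proof.
move=> [a [b [hb [-> ->]]]]; exists (- a), b; split=> //.
by rewrite tofracN hornerN !mulNr.
Qed.

Lemma limC c : lim0 (cst c) c.
Proof.
exists c%:P, 1; split; first by rewrite hornerC oner_neq0.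
by rewrite !hornerC !divr1.
Qed.

Lemma lim_eps : lim0 eps 0.
Proof.
exists 'X, 1; split; first by rewrite hornerC oner_neq0.
by rewrite hornerX hornerC !divr1.
Qed.

Lemma limV x c : lim0 x c -> c != 0 -> lim0 x^-1 c^-1.
Proof.
move=> [a [b [hb [-> ->]]]] hc; exists b, a.
have ha : a.[0] != 0 by apply: contra hc => /eqP ->; rewrite mul0r.
by rewrite invf_div invf_div.
Qed.

Lemma lim_neq0 x c : lim0 x c -> c != 0 -> x != 0.
Proof.
move=> h hc; apply/eqP=> x0; move: h; rewrite x0 => h.
have h0 : lim0 0 0.
  exists 0, 1; split; first by rewrite hornerC oner_neq0.
  by rewrite rmorph0 !mul0r horner0 mul0r.
by have := lim0_uniq h h0; apply/eqP.
Qed.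

Lemma lim1 : lim0 1 1.
Proof.
exists 1, 1; split; first by rewrite hornerC oner_neq0.
by rewrite hornerC !divr1 rmorph1.
Qed.

Definition regb (x : Keps) : bool :=
  if excluded_middle_informative (exists c, lim0 x c) then true else false.

Lemma regbP x : reflect (exists c, lim0 x c) (regb x).
Proof. by rewrite /regb; case: excluded_middle_informative => h; constructor. Qed.

Definition ev0k (x : Keps) : CC := epsilon (inhabits 0) (lim0 x).

Lemma ev0kE x c : lim0 x c -> ev0k x = c.
Proof.
move=> h; apply: (lim0_uniq _ h); rewrite /ev0k.
by apply: (epsilon_spec (inhabits 0) (lim0 x)); exists c.
Qed.

Lemma regb_lim x : regb x -> lim0 x (ev0k x).
Proof. by move/regbP=> [c h]; rewrite (ev0kE h). Qed.

Definition regp : {pred Keps} := fun x => regb x.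

Fact regp_subring : subring_closed regp.
Proof.
split.
- by apply/regbP; exists 1; exact: lim1.
- move=> x y /regb_lim hx /regb_lim hy; apply/regbP; eexists.
  exact: limD hx (limN hy).
- move=> x y /regb_lim hx /regb_lim hy; apply/regbP; eexists.
  exact: limM hx hy.
Qed.

HB.instance Definition _ := GRing.isSubringClosed.Build Keps regp regp_subring.

Record O := MkO { oval : Keps; ovalP : oval \in regp }.
HB.instance Definition _ := [isSub for oval].
HB.instance Definition _ := [Choice of O by <:].
HB.instance Definition _ := [SubChoice_isSubComNzRing of O by <:].

Definition ev0 (o : O) : CC := ev0k (oval o).

Lemma ev0_lim o : lim0 (oval o) (ev0 o).
Proof. exact: regb_lim (ovalP o). Qed.

Lemma ev0_zmod : zmod_morphism ev0.
Proof.
move=> x y; rewrite /ev0; apply: ev0kE; rewrite (_ : oval (x - y) = oval x - oval y) //.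
exact: limD (ev0_lim x) (limN (ev0_lim y)).
Qed.

Lemma ev0_monoid : monoid_morphism ev0.
Proof.
split.
- rewrite /ev0 (_ : oval 1 = 1) //; apply: ev0kE; exact: lim1.
- move=> x y; rewrite /ev0; apply: ev0kE; rewrite (_ : oval (x * y) = oval x * oval y) //.
  exact: limM (ev0_lim x) (ev0_lim y).
Qed.

HB.instance Definition _ := GRing.isZmodMorphism.Build O CC ev0 ev0_zmod.
HB.instance Definition _ := GRing.isMonoidMorphism.Build O CC ev0 ev0_monoid.

Definition mkO (x : Keps) : O := insubd 0 x.

Lemma mkO_lim x c : lim0 x c -> val (mkO x) = x /\ ev0 (mkO x) = c.
Proof.
move=> h; have hr : x \in regp by apply/regbP; exists c.
have E : val (mkO x) = x by rewrite /mkO insubdK.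
by split=> //; rewrite /ev0 E (ev0kE h).
Qed.
Lemma mapvZ n (c : O) (p : {mpoly O[n]}) : map_mpoly val (c *: p) = val c *: map_mpoly val p.
Proof. exact: map_mpolyZ. Qed.
Lemma mapvX n (m : 'X_{1..n}) : map_mpoly (val : O -> Keps) 'X_[m] = 'X_[m].
Proof. exact: map_mpolyX. Qed.
Lemma mapeZ n (c : O) (p : {mpoly O[n]}) : map_mpoly ev0 (c *: p) = ev0 c *: map_mpoly ev0 p.
Proof. exact: map_mpolyZ. Qed.
Lemma mapeX n (m : 'X_{1..n}) : map_mpoly ev0 'X_[m] = 'X_[m].
Proof. exact: map_mpolyX. Qed.
Lemma mapv0 n : map_mpoly (val : O -> Keps) (0 : {mpoly O[n]}) = 0.
Proof. exact: rmorph0. Qed.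
Lemma mape0 n : map_mpoly ev0 (0 : {mpoly O[n]}) = 0.
Proof. exact: rmorph0. Qed.

Lemma eps_neq0 : eps != 0.
Proof. by rewrite /eps tofrac_eq0 polyX_eq0. Qed.

Theorem lemma6 (n d r : nat) (f : {mpoly CC[n]}) (b : 'I_n -> CC)
    (L : 'I_r -> 'I_n -> Keps) :
  f \is d.-homog ->
  (exists i : 'I_n, b i != 0) ->
  local_border_decomp d f b L ->
  exists L' : 'I_r -> 'I_n -> Keps, standard_local_border_decomp d f b L'.
Proof.
move=> _ [j bj] [hF hL].
case: r L hF hL => [|r'] L hF hL.
  by exists L; split; [split|].
pose k0 : 'I_r'.+1 := ord0.
have [q [c [c0 hv]]] := hL k0.
pose v i := eps ^ (- q) * L k0 i.
pose w i := cst (c * b i).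
have vj0 : v j != 0 := lim_neq0 (hv j) (mulf_neq0 c0 bj).
pose t i := (w i - v i) / v j.
have ht i : lim0 (t i) 0.
  have := limM (limD (limC (c * b i)) (limN (hv i))) (limV (hv j) (mulf_neq0 c0 bj)).
  by rewrite subrr mul0r.
pose t0 i := mkO (t i).
have t0E i : val (t0 i) = t i /\ ev0 (t0 i) = 0 := mkO_lim (ht i).
pose L' k i := L k i + L k j * t i.
exists L'.
split; [split|]; last first.
- move=> h; exists q, c => i.
  have -> : Ordinal h = k0 by apply/val_inj.
  have Lk i' : L k0 i' = eps ^ q * v i'.
    by rewrite /v mulrA -expfzDr ?eps_neq0 // subrr expr0z mul1r.
  have aux (e vi vj wi : Keps) : vj != 0 -> e * vi + e * vj * ((wi - vi) / vj) = e * wi.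
    by move=> hh; rewrite -mulrA [vj * _]mulrCA mulfV // mulr1 -mulrDr addrC subrK.
  rewrite /L' !Lk /t aux //.
  by rewrite /w /cst polyCM tofracM mulrA.
- move=> k; have [qk [ck [ck0 hk]]] := hL k; exists qk, ck; split=> // i.
  rewrite /L' mulrDr mulrA.
  by have := limD (hk i) (limM (hk j) (ht i)); rewrite mulr0 addr0.
pose T0 : {mpoly O[n]} := \sum_(i < n) t0 i *: 'X_i.
pose lq0 : n.-tuple {mpoly O[n]} := [tuple 'X_i + (if i == j then T0 else 0) | i < n].
pose lq : n.-tuple {mpoly Keps[n]} := [tuple of [seq map_mpoly val q | q <- lq0]].
pose F := \sum_(k < r'.+1) linform (L k) ^+ d.
have hF' m : lim0 F@_m f@_m := hF m.
pose F0 : {mpoly O[n]} := \sum_(m <- msupp F) mkO F@_m *: 'X_[m].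
have F0E : map_mpoly val F0 = F.
  rewrite /F0 raddf_sum /= [RHS]mpolyE; apply: eq_bigr => m _.
  by rewrite mapvZ mapvX (mkO_lim (hF' m)).1.
have TE : map_mpoly val T0 = \sum_(i < n) t i *: 'X_i.
  rewrite /T0 raddf_sum /=; apply: eq_bigr => i _.
  by rewrite mapvZ mapvX (t0E i).1.
have lin k : linform (L' k) = linform (L k) \mPo lq.
  rewrite /linform raddf_sum /=.
  under [RHS]eq_bigr => i _ do rewrite comp_mpolyZ comp_mpolyXU -tnth_nth tnth_map tnth_mktuple rmorphD /= mapvX.
  under [RHS]eq_bigr => i _ do rewrite scalerDr.
  under eq_bigr => i _ do rewrite scalerDl.
  rewrite !big_split /=; congr (_ + _).
  rewrite [RHS](bigD1 j) //= eqxx [X in _ = _ + X]big1 ?addr0; last first.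
    by move=> i hij; rewrite (negbTE hij) mapv0 scaler0.
  rewrite TE scaler_sumr; apply: eq_bigr => i _; by rewrite scalerA.
have key : \sum_(k < r'.+1) linform (L' k) ^+ d = map_mpoly val (F0 \mPo lq0).
  rewrite map_mpoly_comp; last exact: val_inj.
  rewrite F0E /F rmorph_sum /=; apply: eq_bigr => k _.
  by rewrite rmorphXn /= lin.
have hT0 : map_mpoly ev0 T0 = 0.
  rewrite /T0 raddf_sum /= big1 // => i _.
  by rewrite mapeZ (t0E i).2 scale0r.
have ev : map_mpoly ev0 (F0 \mPo lq0) = map_mpoly ev0 F0.
  rewrite {1}(comp_mpolyEX F0 lq0) [in RHS](mpolyE F0) !raddf_sum /=.
  apply: eq_bigr => m _; rewrite !mapeZ mapeX comp_mpolyX rmorph_prod /= mpolyXE_id.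
  congr (_ *: _); apply: eq_bigr => i _; rewrite rmorphXn tnth_mktuple; congr (_ ^+ _).
  rewrite rmorphD /= mapeX.
  by case: eqP => _; rewrite ?mape0 ?hT0 addr0.
move=> m; rewrite key mcoeff_map_mpoly.
suff <- : ev0 ((F0 \mPo lq0)@_m) = f@_m by exact: ev0_lim.
rewrite -mcoeff_map_mpoly ev mcoeff_map_mpoly.
change (ev0k (oval F0@_m) = f@_m).
rewrite (_ : oval F0@_m = F@_m); first exact: ev0kE.
by rewrite -F0E mcoeff_map_mpoly.
Qed.
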